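(* Let $\mathcal C=\{\mathbf s_1,\dots,\mathbf s_M\}\subseteq\{0,1\}^K$, $M\ge2$, be a binary CW code of length $K$ and weight $\omega$, used with equiprobable codewords over the Poisson channel with fixed CSI $(\bar c_{\mathrm s},\bar c_{\mathrm n})\in(0,\infty)^2$, and let $P_e^{\mathrm{code}}$ be the codeword error rate of the optimal detector. For $i\ne j$ let $d_{ij}$ be the Hamming distance between $\mathbf s_i$ and $\mathbf s_j$. Then $$P_e^{\mathrm{code}}\le\frac1M\sum_{i\ne j}\left(\tfrac12 f_{d_{ij}}(0)+\sum_{x=1}^\infty f_{d_{ij}}(x)\right),$$ where the sum is over ordered pairs $(i,j)$ with $i\neq j$ and, for $d>0$, $f_d(x)=e^{-(\lambda_1+\lambda_2)}\left(\frac{\lambda_2}{\lambda_1}\right)^{x/2}I_x\!\left(2\sqrt{\lambda_1\lambda_2}\right)$ with $\lambda_1=\frac{d(\bar c_{\mathrm s}+\bar c_{\mathrm n})}{2}$, $\lambda_2=\frac{d\,\bar c_{\mathrm n}}{2}$, and $I_x$ the modified Bessel function of the first kind of order $x$.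
   Context: A binary CW code of length $K$ and weight $\omega$ is a codebook $\mathcal C\subseteq\{0,1\}^K$ in which every codeword has exactly $\omega$ ones. Channel: given transmitted codeword $\mathbf s$, the observations $r[1],\dots,r[K]$ are independent with $r[k]$ Poisson of mean $s[k]\bar c_{\mathrm s}+\bar c_{\mathrm n}$. The optimal detector outputs a codeword maximizing the likelihood $\prod_{k}\frac{(\bar c_{\mathrm s}s[k]+\bar c_{\mathrm n})^{r[k]}e^{-\bar c_{\mathrm s}s[k]-\bar c_{\mathrm n}}}{r[k]!}$ over $\mathcal C$, ties broken uniformly at random among maximizers. The transmitted codeword is uniform on $\mathcal C$, and $P_e^{\mathrm{code}}$ is the probability that the detected codeword differs from the transmitted one. *)

(* Defs.v *)
From HB Require Import structures.
From mathcomp Require Import all_boot all_order all_algebra.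
From mathcomp Require Import all_classical all_reals all_analysis.
Set Implicit Arguments. Unset Strict Implicit. Unset Printing Implicit Defensive.
Import Order.TTheory GRing.Theory Num.Theory.
Local Open Scope ring_scope.

Section Defs.
Variable R : realType.

Definition besselI (n : nat) (z : R) : R :=
  \big[+%R/0%R]_(0 <= m <oo) ((z / 2) ^+ (2 * m + n) / ((m`! * (m + n)`!)%:R)).

Definition fd (cs cn : R) (d x : nat) : R :=
  let l1 := d%:R * (cs + cn) / 2 in
  let l2 := d%:R * cn / 2 in
  expR (- (l1 + l2)) * (l2 / l1) `^ (x%:R / 2) * besselI x (2 * Num.sqrt (l1 * l2)).

Definition lik (cs cn : R) (K : nat) (c : {ffun 'I_K -> bool})
    (r : {ffun 'I_K -> nat}) : R :=
  \prod_(k < K) ((cs * (c k)%:R + cn) ^+ (r k) * expR (- (cs * (c k)%:R + cn))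
                  / ((r k)`!)%:R).

Definition argmax_set (cs cn : R) (K M : nat) (s : 'I_M -> {ffun 'I_K -> bool})
    (r : {ffun 'I_K -> nat}) : {set 'I_M} :=
  [set j | [forall j', lik cs cn (s j') r <= lik cs cn (s j) r]].

(* Probability that the optimal detector (uniform tie breaking) outputs i on r. *)
Definition pdetect (cs cn : R) (K M : nat) (s : 'I_M -> {ffun 'I_K -> bool})
    (r : {ffun 'I_K -> nat}) (i : 'I_M) : R :=
  if i \in argmax_set cs cn s r then (#|argmax_set cs cn s r|%:R)^-1 else 0.

Definition Pe_code (cs cn : R) (K M : nat) (s : 'I_M -> {ffun 'I_K -> bool})
  : \bar R :=
  ((M%:R)^-1)%:E *
  (\sum_(i < M)
     \esum_(r in [set: {ffun 'I_K -> nat}])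
       (lik cs cn (s i) r * (1 - pdetect cs cn s r i))%:E)%E.

Definition hamming (K : nat) (a b : {ffun 'I_K -> bool}) : nat :=
  #|[set k | a k != b k]|.

Definition weight (K : nat) (a : {ffun 'I_K -> bool}) : nat := #|[set k | a k]|.

End Defs.

(* Main.v *)
Require Import Defs.
From HB Require Import structures.
From mathcomp Require Import all_boot all_order all_algebra.
From mathcomp Require Import all_classical all_reals all_analysis.
From mathcomp Require Import ring lra.
Set Implicit Arguments. Unset Strict Implicit. Unset Printing Implicit Defensive.
Import Order.TTheory GRing.Theory Num.Theory.
Import numFieldTopology.Exports numFieldNormedType.Exports.
Local Open Scope ring_scope.
Local Open Scope classical_set_scope.

Section P.
Variable R : realType.
Definition Pp (mu : R) (n : nat) : R := mu ^+ n / n`!%:R * expR (- mu).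

Lemma Pp_ge0 mu n : 0 <= mu -> 0 <= Pp mu n.
Proof. by move=> m0; rewrite /Pp mulr_ge0 ?expR_ge0 // divr_ge0 // exprn_ge0. Qed.

Lemma Pp_sum mu : 0 <= mu -> (\sum_(n <oo) (Pp mu n)%:E = 1)%E.
Proof.
move=> mu0.
rewrite (_ : 1%E = ((expR (- mu))%:E * (expR mu)%:E)%E); last first.
  by rewrite -EFinM expRN mulVf ?gt_eqF ?expR_gt0.
under eq_eseriesr do rewrite /Pp EFinM muleC.
rewrite /= nneseriesZl/=; last first.
 by move=> n _; rewrite lee_fin divr_ge0 // exprn_ge0.
congr (_ * _)%E; rewrite expRE -EFin_lim; last first.
  rewrite /pseries/=; under eq_fun do rewrite mulrC.
  exact: is_cvg_series_exp_coeff.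
apply/congr_lim/funext => n/=; rewrite /pseries/= /series/= -sumEFin//.
by under eq_bigr do rewrite mulrC.
Qed.
Lemma Pp_conv mu la a :
  \sum_(n < a.+1) Pp mu n * Pp la (a - n) = Pp (mu + la) a.
Proof.
rewrite /Pp addrC exprDn mulr_suml mulr_suml.
apply: eq_bigr => i _.
have ia : (i <= a)%N by rewrite -ltnS.
have F := bin_fact ia.
have fa : (a`!%:R : R) != 0 by rewrite pnatr_eq0 -lt0n fact_gt0.
have fi : (i`!%:R : R) != 0 by rewrite pnatr_eq0 -lt0n fact_gt0.
have fai : ((a - i)`!%:R : R) != 0 by rewrite pnatr_eq0 -lt0n fact_gt0.
have FR : ('C(a, i)%:R : R) * (i`!%:R * (a - i)`!%:R) = a`!%:R.
  by rewrite -!natrM F.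
rewrite opprD expRD -mulr_natr.
rewrite -FR; field.
by rewrite fi fai pnatr_eq0 -lt0n bin_gt0.
Qed.
Local Open Scope ereal_scope.
Lemma esum_fin_ord (a : nat) (f : nat -> R) : (forall n, 0 <= f n)%R ->
  \esum_(n in `I_a) (f n)%:E = (\sum_(n < a) f n)%:E.
Proof.
move=> f0; rewrite esum_fset//; last by move=> *; rewrite lee_fin.
by rewrite -fsbig_ord sumEFin.
Qed.

Lemma conv_esum (T : choiceType) (mu la : R) (F : nat -> T -> R) :
  (0 <= mu)%R -> (0 <= la)%R -> (forall a t, 0 <= F a t)%R ->
  \esum_(n in [set: nat]) \esum_(p in [set: nat * T])
      (Pp mu n * Pp la p.1 * F (n + p.1)%N p.2)%:E
   = \esum_(p in [set: nat * T]) (Pp (mu+la) p.1 * F p.1 p.2)%:E.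
Proof.
move=> mu0 la0 F0.
have G0 : forall n a m t, (0 <= Pp mu n * Pp la a * F m t)%R.
  by move=> n a m t; exact: (mulr_ge0 (mulr_ge0 (Pp_ge0 _ mu0) (Pp_ge0 _ la0)) (F0 _ _)).
rewrite (esum_esum (J := fun=> [set: nat * T])); last by move=> *; rewrite lee_fin G0.
transitivity (\esum_(p in [set: nat * T]) \esum_(n in `I_(p.1.+1))
    (Pp mu n * Pp la (p.1 - n) * F p.1 p.2)%:E); last first.
  apply: eq_esum => -[a t] _ /=; rewrite esum_fin_ord; last by move=> n; apply: G0.
  by rewrite -mulr_suml Pp_conv.
rewrite (esum_esum (J := fun p => `I_(p.1.+1))); last by move=> *; rewrite lee_fin G0.
rewrite (reindex_esum [set: nat * (nat * T)] _ (fun x : nat * (nat * T) => ((x.1 + x.2.1)%N, x.2.2, x.1))).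
  have -> : [set: nat] `*`` (fun=> [set: nat * T]) = [set: nat * (nat * T)].
    by apply/seteqP; split.
  by apply: eq_esum => -[n [a t]] _ /=; rewrite addKn.
split.
- by move=> [n [a t]] _ /=; split => //; rewrite ltnS leq_addr.
- move=> [n [a t]] [m [b u]] _ _ /= [] h1 h2 h3.
  by subst; move/eqP: h1; rewrite eqn_add2l => /eqP ->.
- move=> [[a t] n] /= [_ H]; exists (n, (a - n, t))%N => //=.
  by rewrite subnKC // -ltnS.
Qed.

Lemma esum_swap (T1 T2 : choiceType) (G : T1 -> T2 -> \bar R) :
  (forall a b, 0 <= G a b) ->
  \esum_(a in [set: T1]) \esum_(b in [set: T2]) G a b =
  \esum_(b in [set: T2]) \esum_(a in [set: T1]) G a b.
Proof.
move=> G0.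
rewrite (esum_esum (J := fun=> [set: T2])) //.
rewrite (esum_esum (J := fun=> [set: T1])) //.
rewrite (reindex_esum ([set: T2] `*`` fun=> [set: T1]) _ (fun x : T2 * T1 => (x.2, x.1))) //.
split.
- by move=> [b a] _.
- by move=> [b a] [b' a'] _ _ /= [-> ->].
- by move=> [a b] _; exists (b, a).
Qed.

Lemma esum_Pp_scale (c mu : R) : (0 <= c)%R -> (0 <= mu)%R ->
  \esum_(n in [set: nat]) (c * Pp mu n)%:E = c%:E.
Proof.
move=> c0 mu0; rewrite -nneseries_esumT; last by move=> n; rewrite lee_fin mulr_ge0 ?Pp_ge0.
under eq_eseriesr do rewrite EFinM.
rewrite nneseriesZl; last by move=> n _; rewrite lee_fin Pp_ge0.
by rewrite Pp_sum // mule1.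
Qed.

Lemma conv_esum2 (T : choiceType) (mu la : R) (F : T -> nat -> R) :
  (0 <= mu)%R -> (0 <= la)%R -> (forall a t, 0 <= F t a)%R ->
  \esum_(n in [set: nat]) \esum_(p in [set: T * nat])
      (Pp mu n * Pp la p.2 * F p.1 (n + p.2)%N)%:E
   = \esum_(p in [set: T * nat]) (Pp (mu+la) p.2 * F p.1 p.2)%:E.
Proof.
move=> mu0 la0 F0.
have sw : set_bij [set: nat * T] [set: T * nat] (fun x => (x.2, x.1)).
  split.
  - by move=> [b a] _.
  - by move=> [b a] [b' a'] _ _ /= [-> ->].
  - by move=> [a b] _; exists (b, a).
rewrite (reindex_esum _ _ _ _ sw) /=.
rewrite -(conv_esum (F := fun a t => F t a)) //.
by apply: eq_esum => n _; rewrite (reindex_esum _ _ _ _ sw).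
Qed.
End P.

Section J.
Variable R : realType.
Local Open Scope ereal_scope.

Definition ext K (x : nat * {ffun 'I_K -> nat}) : {ffun 'I_K.+1 -> nat} :=
  [ffun k => if unlift ord0 k is Some k' then x.2 k' else x.1].

Lemma ext0 K x : ext x (@ord0 K) = x.1.
Proof. by rewrite /ext ffunE unlift_none. Qed.

Lemma extS K x (k : 'I_K) : ext x (lift ord0 k) = x.2 k.
Proof. by rewrite /ext ffunE liftK. Qed.

Lemma ext_bij K : set_bij [set: nat * {ffun 'I_K -> nat}] [set: {ffun 'I_K.+1 -> nat}] (@ext K).
Proof.
split.
- by [].
- move=> [n r] [m u] _ _ /= E.
  have h1 := ext0 (n, r); rewrite E ext0 /= in h1.
  congr pair => //; apply/ffunP => k.
  by have := extS (n, r) k; rewrite E extS /=.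
- move=> r _; exists (r ord0, [ffun k => r (lift ord0 k)]) => //.
  apply/ffunP => k; rewrite /ext ffunE.
  by case: unliftP => [j ->|->] /=; rewrite ?ffunE.
Qed.

Lemma esum_pairT (T1 T2 : choiceType) (G : T1 * T2 -> \bar R) :
  (forall x, 0 <= G x) ->
  \esum_(x in [set: T1 * T2]) G x = \esum_(a in [set: T1]) \esum_(b in [set: T2]) G (a, b).
Proof.
move=> G0; rewrite (esum_esum (J := fun=> [set: T2])) //.
have -> : [set: T1] `*`` (fun=> [set: T2]) = [set: T1 * T2] by apply/seteqP; split.
by apply: eq_esum => -[a b].
Qed.

Lemma joint K (mu : 'I_K -> R) (al be : 'I_K -> bool) (h : nat -> nat -> R) :
  (forall k, 0 <= mu k)%R -> (forall k, ~~ (al k && be k)) -> (forall a b, 0 <= h a b)%R ->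
  \esum_(r in [set: {ffun 'I_K -> nat}])
     ((\prod_(k < K) Pp (mu k) (r k)) *
       h (\sum_(k < K) al k * r k)%N (\sum_(k < K) be k * r k)%N)%:E
  = \esum_(p in [set: nat * nat])
     (Pp (\sum_(k < K) (al k)%:R * mu k) p.1 * Pp (\sum_(k < K) (be k)%:R * mu k) p.2
      * h p.1 p.2)%:E.
Proof.
elim: K mu al be h => [|K IH] mu al be h mu0 dis h0.
  rewrite (_ : [set: {ffun 'I_0 -> nat}] = [set [ffun=> 0%N]]); last first.
    by apply/seteqP; split => r _ //=; apply/ffunP => -[].
  rewrite esum_set1; last by rewrite big_ord0 mul1r lee_fin h0.
  rewrite !big_ord0 mul1r.
  rewrite (esumID [set (0%N, 0%N)]); last first.
    by move=> p _; rewrite lee_fin !mulr_ge0 ?Pp_ge0.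
  rewrite setTI esum_set1; last by rewrite lee_fin !mulr_ge0 ?Pp_ge0.
  rewrite esum1 ?adde0; last first.
    move=> [a b] [_ /= H]; apply/eqP; rewrite eqe /Pp !expr0n.
    case: a H => [|a]; case: b => [|b] //= H; by rewrite ?mulr0n ?mul0r ?mulr0 ?mul0r.
  by rewrite /Pp /= expr0n /= oppr0 expR0 !mulr1 invr1 !mul1r.
have Pn : forall m n, (0 <= Pp (mu m) n)%R by move=> m n; apply: Pp_ge0.
rewrite (reindex_esum _ _ _ _ (ext_bij K)).
rewrite esum_pairT; last first.
  by move=> *; rewrite lee_fin mulr_ge0 ?prodr_ge0.
set mu' := fun k : 'I_K => mu (lift ord0 k).
set al' := fun k : 'I_K => al (lift ord0 k).
set be' := fun k : 'I_K => be (lift ord0 k).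
set lA := (\sum_(k < K) (al' k)%:R * mu' k)%R.
set lB := (\sum_(k < K) (be' k)%:R * mu' k)%R.
have lA0 : (0 <= lA)%R by rewrite sumr_ge0 // => k _; rewrite mulr_ge0 ?mu0.
have lB0 : (0 <= lB)%R by rewrite sumr_ge0 // => k _; rewrite mulr_ge0 ?mu0.
transitivity (\esum_(n in [set: nat]) \esum_(p in [set: nat * nat])
   (Pp lA p.1 * Pp lB p.2 * (Pp (mu ord0) n *
        h (al ord0 * n + p.1)%N (be ord0 * n + p.2)%N))%:E).
  apply: eq_esum => n _ /=.
  rewrite -(IH mu' al' be' (fun a b => Pp (mu ord0) n * h (al ord0 * n + a)%N (be ord0 * n + b)%N)%R).
  - apply: eq_esum => r _; congr EFin.
    rewrite big_ord_recl !ext0 /=.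
    rewrite (big_ord_recl K (fun k => al k * ext (n, r) k)%N) ext0 /=.
    rewrite (big_ord_recl K (fun k => be k * ext (n, r) k)%N) ext0 /=.
    under eq_bigr do rewrite extS.
    under [X in (_ + X)%N]eq_bigr do rewrite extS.
    under [X in h _ (_ + X)%N]eq_bigr do rewrite extS.
    by rewrite /mu' /al' /be'; ring.
  - by move=> k; apply: mu0.
  - by move=> k; apply: dis.
  - by move=> a b; rewrite mulr_ge0 ?h0.
rewrite !big_ord_recl -/mu' -/al' -/be' -/lA -/lB.
have := dis ord0; case: (al ord0); case: (be ord0) => //= _.
- transitivity (\esum_(n in [set: nat]) \esum_(p in [set: nat * nat])
     (Pp (mu ord0) n * Pp lA p.1 * (Pp lB p.2 * h (n + p.1)%N p.2))%:E).
    apply: eq_esum => n _; apply: eq_esum => p _.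
    by rewrite mul1n mul0n add0n; congr EFin; ring.
  rewrite (conv_esum (F := fun a b => Pp lB b * h a b)%R) //; last by move=> a t; rewrite mulr_ge0 ?Pp_ge0.
  apply: eq_esum => p _; rewrite /= ?mulr1n ?mulr0n mul1r mul0r add0r.
  by congr EFin; ring.
- transitivity (\esum_(n in [set: nat]) \esum_(p in [set: nat * nat])
     (Pp (mu ord0) n * Pp lB p.2 * (Pp lA p.1 * h p.1 (n + p.2)%N))%:E).
    apply: eq_esum => n _; apply: eq_esum => p _.
    by rewrite mul1n mul0n add0n; congr EFin; ring.
  rewrite (conv_esum2 (F := fun a b => Pp lA a * h a b)%R) //; last by move=> a t; rewrite mulr_ge0 ?Pp_ge0.
  apply: eq_esum => p _; rewrite /= ?mulr1n ?mulr0n mul1r mul0r add0r.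
  by congr EFin; ring.
- rewrite esum_swap; last first.
    by move=> *; rewrite lee_fin (mulr_ge0 (mulr_ge0 (Pp_ge0 _ lA0) (Pp_ge0 _ lB0)) (mulr_ge0 (Pn _ _) (h0 _ _))).
  apply: eq_esum => p _; rewrite /= ?mulr0n !mul0r !add0r.
  transitivity (\esum_(i in [set: nat]) ((Pp lA p.1 * Pp lB p.2 * h p.1 p.2) * Pp (mu ord0) i)%:E).
    by apply: eq_esum => i _; rewrite !mul0n !add0n; congr EFin; ring.
  by rewrite esum_Pp_scale // (mulr_ge0 (mulr_ge0 (Pp_ge0 _ lA0) (Pp_ge0 _ lB0)) (h0 _ _)).
Qed.
End J.

Section B.
Variable R : realType.

Lemma c_id (l1 l2 : R) (x : nat) : 0 < l1 -> 0 < l2 ->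
  (l2 / l1) `^ (x%:R / 2) * Num.sqrt (l1 * l2) ^+ x = l2 ^+ x.
Proof.
move=> h1 h2.
rewrite [x%:R / 2]mulrC powRrM powR12_sqrt ?divr_ge0 ?ltW // powR_mulrn ?sqrtr_ge0 //.
rewrite -exprMn -sqrtrM ?divr_ge0 ?ltW //.
rewrite (_ : l2 / l1 * (l1 * l2) = l2 ^+ 2); last by field; rewrite gt_eqF.
by rewrite sqrtr_sqr gtr0_norm.
Qed.

Definition bt (s : R) (x a : nat) : R := s ^+ (2 * a + x) / ((a`! * (a + x)`!)%:R).

Lemma bt_ge0 s x a : 0 <= s -> 0 <= bt s x a.
Proof. by move=> s0; rewrite /bt divr_ge0 ?exprn_ge0. Qed.

Lemma bt_cvg s x : 0 <= s -> cvgn (series (bt s x)).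
Proof.
move=> s0.
apply: (@series_le_cvg _ _ (s ^+ x *: exp_coeff (s ^+ 2))).
- by move=> a; apply: bt_ge0.
- move=> a; have -> : (s ^+ x *: exp_coeff (s^+2)) a = s^+x * exp_coeff (s^+2) a by [].
  by rewrite /exp_coeff /= mulr_ge0 ?divr_ge0 ?exprn_ge0.
- move=> a; have -> : (s ^+ x *: exp_coeff (s^+2)) a = s^+x * exp_coeff (s^+2) a by [].
  rewrite /exp_coeff /= /bt natrM invfM exprD -exprM mulrA.
  rewrite (_ : s ^+ (2 * a) * s ^+ x / a`!%:R = s ^+ x * (s ^+ (2 * a) / a`!%:R)); last by ring.
  rewrite ler_piMr //.
  + by rewrite mulr_ge0 ?divr_ge0 ?exprn_ge0.
  + by rewrite invf_le1 ?ler1n ?ltr0n ?fact_gt0.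
- exact/is_cvg_seriesZ/is_cvg_series_exp_coeff.
Qed.
Lemma skellam (l1 l2 : R) (x : nat) : 0 < l1 -> 0 < l2 ->
  (\sum_(a <oo) (Pp l1 a * Pp l2 (a + x))%:E =
  (expR (- (l1 + l2)) * (l2 / l1) `^ (x%:R / 2) *
     besselI x (2 * Num.sqrt (l1 * l2)))%:E)%E.
Proof.
move=> h1 h2.
set s := Num.sqrt (l1 * l2).
have s0 : 0 <= s by apply: sqrtr_ge0.
have term a : Pp l1 a * Pp l2 (a + x) =
    (expR (- (l1 + l2)) * (l2 / l1) `^ (x%:R / 2)) * bt s x a.
  rewrite /Pp /bt (exprD l2) (exprD s) -(c_id x h1 h2) -/s exprM sqr_sqrtr ?mulr_ge0 ?ltW //.
  rewrite opprD expRD exprMn natrM invfM; ring.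
under eq_eseriesr do rewrite term EFinM.
rewrite nneseriesZl; last by move=> a _; rewrite lee_fin bt_ge0.
rewrite [RHS]EFinM; congr (_ * _)%E.
have -> : besselI x (2 * s) = limn (series (bt s x)).
  rewrite /besselI; do 2 f_equal; apply/funext => n; rewrite /series /=.
  apply: eq_bigr => a _; rewrite /bt.
  by rewrite (_ : 2 * s / 2 = s) //; rewrite mulrC mulKf.
rewrite -EFin_lim; last exact: bt_cvg.
by apply/congr_lim/funext => n /=; rewrite /series /= sumEFin.
Qed.
End B.

Section Q.
Variable R : realType.
Local Open Scope ereal_scope.

Definition G (a b : nat) : R := if (a < b)%N then 1%R else if a == b then (1/2)%R else 0%R.

Lemma G_ge0 a b : (0 <= G a b)%R.
Proof. by rewrite /G; case: ltnP => _ //; case: eqP. Qed.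

Definition Fx (l1 l2 : R) (x : nat) : R :=
  expR (- (l1 + l2)) * (l2 / l1) `^ (x%:R / 2) * besselI x (2 * Num.sqrt (l1 * l2)).

Lemma pairsum (l1 l2 : R) : (0 < l1)%R -> (0 < l2)%R ->
  \esum_(p in [set: nat * nat]) (Pp l1 p.1 * Pp l2 p.2 * G p.1 p.2)%:E
  = ((1/2) * Fx l1 l2 0)%:E + \sum_(1 <= x <oo) (Fx l1 l2 x)%:E.
Proof.
move=> h1 h2.
have f0 : forall a b, 0 <= (Pp l1 a * Pp l2 b * G a b)%:E.
  by move=> a b; rewrite lee_fin (mulr_ge0 (mulr_ge0 (Pp_ge0 _ (ltW h1)) (Pp_ge0 _ (ltW h2))) (G_ge0 _ _)).
have sk x : \sum_(a <oo) (Pp l1 a * Pp l2 (a + x))%:E = (Fx l1 l2 x)%:E.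
  by rewrite skellam.
have F0 x : (0 <= Fx l1 l2 x)%R.
  by rewrite -lee_fin -sk; apply: nneseries_ge0 => a _ _; rewrite lee_fin (mulr_ge0 (Pp_ge0 _ (ltW h1)) (Pp_ge0 _ (ltW h2))).
pose Q := [set p : nat * nat | (p.1 <= p.2)%N].
transitivity (\esum_(p in Q) (Pp l1 p.1 * Pp l2 p.2 * G p.1 p.2)%:E).
  rewrite [RHS]esum_mkcond; apply: eq_esum => -[a b] _ /=.
  case: ifPn => // /negP abQ; congr EFin.
  have : ~~ (a <= b)%N by apply/negP => ab; apply: abQ; rewrite inE.
  rewrite -ltnNge => ba; rewrite /G ltnNge (ltnW ba) /= gtn_eqF //.
  by rewrite mulr0.
rewrite (reindex_esum [set: nat * nat] Q (fun x : nat * nat => (x.2, (x.2 + x.1)%N))); last first.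
  split.
  - by move=> [x a] _; rewrite /Q /= leq_addr.
  - move=> [x a] [y b] _ _ /= [E1 E2]; subst.
    by move/eqP: E2; rewrite eqn_add2l => /eqP ->.
  - move=> [a b]; rewrite /Q /= => ab; exists (b - a, a)%N => //=.
    by rewrite subnKC.
rewrite esum_pairT /=; last by move=> x; apply: f0.
rewrite -nneseries_esumT; last by move=> x; apply: esum_ge0 => a _; apply: f0.
under eq_eseriesr => x _.
  rewrite -nneseries_esumT; last by move=> a; apply: f0.
  over.
transitivity (\sum_(x <oo) ((if (0 < x)%N then 1 else 1/2) * Fx l1 l2 x)%:E).
  apply: eq_eseriesr => x _ /=.
  transitivity (\sum_(a <oo) ((if (0 < x)%N then 1 else 1/2)%:E * (Pp l1 a * Pp l2 (a + x))%:E)).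
    apply: eq_eseriesr => a _; rewrite -EFinM; congr EFin; rewrite mulrC /G.
    by case: x => [|x]; rewrite ?addn0 ?ltnn ?eqxx // addnS ltnS leq_addr.
  rewrite nneseriesZl ?sk -?EFinM //.
  by move=> a _; rewrite lee_fin (mulr_ge0 (Pp_ge0 _ (ltW h1)) (Pp_ge0 _ (ltW h2))).
rewrite (nneseries_recl (P := xpredT)) //; last first.
  by move=> k _; rewrite lee_fin mulr_ge0 ?F0 //; case: ifP.
congr (_ + _)%E.
rewrite !ereal_series; apply: eq_eseriesr => k /= k1.
by rewrite k1 mul1r.
Qed.
End Q.

Section L.
Variable R : realType.

Lemma card_sum K (P : 'I_K -> bool) : #|[set k | P k]%SET| = (\sum_(k < K) (P k : nat))%N.
Proof.
rewrite -sum1_card big_mkcond /=; apply: eq_bigr => k _.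
by rewrite inE; case: (P k).
Qed.

Lemma lik_Pp (cs cn : R) K (c : {ffun 'I_K -> bool}) r :
  lik cs cn c r = \prod_(k < K) Pp (cs * (c k)%:R + cn) (r k).
Proof. by apply: eq_bigr => k _; rewrite /Pp mulrAC. Qed.

Lemma lik_decomp (cs cn : R) K (c : {ffun 'I_K -> bool}) r :
  lik cs cn c r = (cs + cn) ^+ (\sum_(k < K) c k * r k)%N *
     cn ^+ (\sum_(k < K) (~~ c k) * r k)%N *
     expR (- (cs * (weight c)%:R + K%:R * cn)) * \prod_(k < K) ((r k)`!%:R)^-1.
Proof.
rewrite /lik.
transitivity (\prod_(k < K) ((cs + cn) ^+ (c k * r k) * cn ^+ ((~~ c k) * r k) *
    expR (- (cs * (c k)%:R + cn)) * ((r k)`!%:R)^-1)).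
  by apply: eq_bigr => k _; case: (c k) => /=; rewrite ?mul1n ?mul0n ?expr0 ?mulr1 ?mul1r ?mulr0 ?add0r.
rewrite !big_split /= !prodrXr -expR_sum.
congr (_ * _ * expR _ * _).
rewrite sumrN big_split /= -mulr_sumr sumr_const card_ord /weight card_sum natr_sum.
by rewrite mulr_natl.
Qed.

Lemma cmp_uv (u v : R) a b : 0 < v -> v < u -> (a < b)%N ->
  u ^+ a * v ^+ b < u ^+ b * v ^+ a.
Proof.
move=> v0 vu ab; have u0 : 0 < u by apply: lt_trans vu.
rewrite -(subnKC (ltnW ab)) !exprD.
rewrite mulrA [X in _ < X]mulrAC ltr_pM2l ?mulr_gt0 ?exprn_gt0 //.
by rewrite ltrXn2r ?ltW // subn_eq0 -ltnNge ab.
Qed.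

Lemma sum_split2 K (c1 c2 : 'I_K -> bool) (r : 'I_K -> nat) :
  (\sum_(k < K) c1 k * r k = \sum_(k < K) (c1 k && ~~ c2 k) * r k +
      \sum_(k < K) (c1 k && c2 k) * r k)%N.
Proof.
by rewrite -big_split; apply: eq_bigr => k _ /=; case: (c1 k); case: (c2 k); rewrite ?mul0n ?add0n ?addn0.
Qed.

Lemma lik_cmp (cs cn : R) K (c1 c2 : {ffun 'I_K -> bool}) r :
  0 < cs -> 0 < cn -> weight c1 = weight c2 ->
  (if lik cs cn c1 r < lik cs cn c2 r then 1 else
     if lik cs cn c1 r == lik cs cn c2 r then 1/2 else 0) =
  G R (\sum_(k < K) (c1 k && ~~ c2 k) * r k)%N (\sum_(k < K) (~~ c1 k && c2 k) * r k)%N.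
Proof.
move=> cs0 cn0 w12.
rewrite !lik_decomp w12.
rewrite (sum_split2 c1 c2) (sum_split2 (fun k => ~~ c1 k) (fun k => ~~ c2 k)).
rewrite (sum_split2 c2 c1) (sum_split2 (fun k => ~~ c2 k) (fun k => ~~ c1 k)).
set a := (\sum_(k < K) (c1 k && ~~ c2 k) * r k)%N.
set b := (\sum_(k < K) (~~ c1 k && c2 k) * r k)%N.
rewrite (_ : (\sum_(k < K) (c2 k && ~~ c1 k) * r k)%N = b); last first.
  by apply: eq_bigr => k _; rewrite andbC.
rewrite (_ : (\sum_(k < K) (~~ c2 k && ~~ ~~ c1 k) * r k)%N = a); last first.
  by apply: eq_bigr => k _; rewrite negbK andbC.
rewrite (_ : (\sum_(k < K) (~~ c1 k && ~~ ~~ c2 k) * r k)%N = b); last first.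
  by apply: eq_bigr => k _; rewrite negbK.
rewrite (_ : (\sum_(k < K) (c2 k && c1 k) * r k)%N = (\sum_(k < K) (c1 k && c2 k) * r k)%N); last first.
  by apply: eq_bigr => k _; rewrite andbC.
rewrite (_ : (\sum_(k < K) (~~ c2 k && ~~ c1 k) * r k)%N = (\sum_(k < K) (~~ c1 k && ~~ c2 k) * r k)%N); last first.
  by apply: eq_bigr => k _; rewrite andbC.
set C := (\sum_(k < K) (c1 k && c2 k) * r k)%N.
set D := (\sum_(k < K) (~~ c1 k && ~~ c2 k) * r k)%N.
set E := expR _.
set P := \prod_(k < K) _.
set u := cs + cn.
have Y0 : 0 < u ^+ C * cn ^+ D * (E * P).
  rewrite !mulr_gt0 ?exprn_gt0 ?expR_gt0 ?addr_gt0 //.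
  by rewrite prodr_gt0 // => k _; rewrite invr_gt0 ltr0n fact_gt0.
have vu : cn < u by rewrite /u; lra.
rewrite !exprD.
rewrite (_ : u ^+ a * u ^+ C * (cn ^+ b * cn ^+ D) * E * P = u ^+ a * cn ^+ b * (u ^+ C * cn ^+ D * (E * P))); last by ring.
rewrite (_ : u ^+ b * u ^+ C * (cn ^+ a * cn ^+ D) * E * P = u ^+ b * cn ^+ a * (u ^+ C * cn ^+ D * (E * P))); last by ring.
rewrite ltr_pM2r // (inj_eq (mulIf (lt0r_neq0 Y0))) /G.
case: ltngtP => [ab|ba|->]; rewrite ?ltxx ?eqxx //.
- by rewrite cmp_uv.
- have := cmp_uv cn0 vu ba.
  by move=> h; rewrite (lt_gtF h) (gt_eqF h).
Qed.
End L.

Section M.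
Variable R : realType.

Definition gij (cs cn : R) K (ci cj : {ffun 'I_K -> bool}) r : R :=
  if lik cs cn ci r < lik cs cn cj r then 1 else
     if lik cs cn ci r == lik cs cn cj r then 1/2 else 0.

Lemma gij_ge0 cs cn K ci cj r : 0 <= @gij cs cn K ci cj r.
Proof. by rewrite /gij; case: ifP => _ //; case: ifP. Qed.

Lemma pdet_bound (cs cn : R) K M (s : 'I_M -> {ffun 'I_K -> bool}) r (i : 'I_M) :
  1 - pdetect cs cn s r i <= \sum_(j < M | j != i) gij cs cn (s i) (s j) r.
Proof.
rewrite /pdetect; set S := argmax_set cs cn s r.
case: ifPn => iS.
- have eqS j : j \in S -> lik cs cn (s j) r = lik cs cn (s i) r.
    move: iS; rewrite /S /argmax_set !inE => /forallP Hi /forallP Hj.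
    by apply/eqP; rewrite eq_le Hi Hj.
  apply: (@le_trans _ _ (\sum_(j < M | j != i) (if j \in S then 1/2 else 0))); last first.
    apply: ler_sum => j _; case: ifP => jS; last exact: gij_ge0.
    by rewrite /gij (eqS j jS) ltxx eqxx.
  rewrite -big_mkcondr /=.
  rewrite (eq_bigl (fun j => j \in S :\ i)); last by move=> j; rewrite !inE.
  rewrite sumr_const.
  have := cardsD1 i S; rewrite iS add1n => cS.
  rewrite cS /=.
  set n := #|S :\ i|.
  case: n => [|n].
    by rewrite invr1 subrr mulr0n.
  have x1 : (1 <= n.+1%:R :> R) by rewrite ler1n.
  rewrite (mulrSr 1 n.+1) -mulr_natr.
  set x := (n.+1)%:R : R.
  have x10 : 0 < x + 1 by lra.
  rewrite mul1r -mulr_natr -/x.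
  rewrite (_ : 1 - (x + 1)^-1 = x / (x + 1)); last by field; apply: lt0r_neq0.
  rewrite ler_pdivrMr //; nra.
- rewrite subr0.
  move: iS; rewrite /S /argmax_set inE negb_forall => /existsP[j].
  rewrite -ltNge => lt_ij.
  have ji : j != i by apply: contraTneq lt_ij => ->; rewrite ltxx.
  rewrite (bigD1 j) //= {1}/gij lt_ij lerDl.
  by apply: sumr_ge0 => k _; apply: gij_ge0.
Qed.

Lemma lik_ge0 (cs cn : R) K (c : {ffun 'I_K -> bool}) r :
  0 <= cs -> 0 <= cn -> 0 <= lik cs cn c r.
Proof.
move=> cs0 cn0; rewrite lik_Pp; apply: prodr_ge0 => k _; apply: Pp_ge0.
by rewrite addr_ge0 ?mulr_ge0.
Qed.

Local Open Scope ereal_scope.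
Lemma pair_esum (cs cn : R) K (ci cj : {ffun 'I_K -> bool}) :
  (0 < cs)%R -> (0 < cn)%R -> ci != cj -> weight ci = weight cj ->
  \esum_(r in [set: {ffun 'I_K -> nat}]) (lik cs cn ci r * gij cs cn ci cj r)%:E
  = ((1/2) * fd cs cn (hamming ci cj) 0)%:E +
    \sum_(1 <= x <oo) (fd cs cn (hamming ci cj) x)%:E.
Proof.
move=> cs0 cn0 neq w12.
set al := fun k => ci k && ~~ cj k.
set be := fun k => ~~ ci k && cj k.
set mu := fun k => (cs * (ci k)%:R + cn)%R.
have mu0 k : (0 <= mu k)%R by rewrite /mu addr_ge0 ?mulr_ge0 ?ler0n ?ltW.
transitivity (\esum_(r in [set: {ffun 'I_K -> nat}])
   ((\prod_(k < K) Pp (mu k) (r k)) *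
       G R (\sum_(k < K) al k * r k)%N (\sum_(k < K) be k * r k)%N)%:E).
  by apply: eq_esum => r _; rewrite lik_Pp /gij lik_cmp.
have hG : forall a b, (0 <= G R a b)%R by move=> a b; apply: G_ge0.
have dis : forall k, ~~ (al k && be k) by move=> k; rewrite /al /be; case: (ci k); case: (cj k).
rewrite (joint mu0 dis hG).
set d := hamming ci cj.
set nA := (\sum_(k < K) (al k : nat))%N.
set nB := (\sum_(k < K) (be k : nat))%N.
set nC := (\sum_(k < K) ((ci k && cj k) : nat))%N.
have wi : weight ci = (nA + nC)%N.
  rewrite /weight card_sum /nA /nC -big_split; apply: eq_bigr => k _.
  by rewrite /al; case: (ci k); case: (cj k).
have wj : weight cj = (nB + nC)%N.
  rewrite /weight card_sum /nB /nC -big_split; apply: eq_bigr => k _.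
  by rewrite /be; case: (ci k); case: (cj k).
have hd : d = (nA + nB)%N.
  rewrite /d /hamming card_sum /nA /nB -big_split; apply: eq_bigr => k _.
  by rewrite /al /be; case: (ci k); case: (cj k).
have AB : nA = nB by apply/eqP; rewrite -(eqn_add2r nC) -wi -wj w12.
have d0 : (0 < d)%N.
  have [k hk] : exists k, ci k != cj k.
    apply/existsP; apply: contraR neq => /existsPn H.
    by apply/eqP/ffunP => k; apply/eqP; have := H k; rewrite negbK.
  by apply/card_gt0P; exists k; rewrite inE.
have l1E : (\sum_(k < K) (al k)%:R * mu k = d%:R * (cs + cn) / 2)%R.
  rewrite hd -AB.
  transitivity (\sum_(k < K) (al k : nat)%:R * (cs + cn))%R.
    by apply: eq_bigr => k _; rewrite /al /mu; case: (ci k); case: (cj k);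
      rewrite /= ?mul0r ?mulr1 ?mul1r.
  rewrite -mulr_suml -natr_sum -/nA natrD; by field.
have l2E : (\sum_(k < K) (be k)%:R * mu k = d%:R * cn / 2)%R.
  rewrite hd AB.
  transitivity (\sum_(k < K) (be k : nat)%:R * cn)%R.
    by apply: eq_bigr => k _; rewrite /be /mu; case: (ci k); case: (cj k);
      rewrite /= ?mul0r ?mulr1 ?mul1r ?mulr0 ?add0r.
  rewrite -mulr_suml -natr_sum -/nB natrD; by field.
have dR : (0 < d%:R :> R)%R by rewrite ltr0n.
rewrite l1E l2E pairsum //; last by rewrite divr_gt0 ?mulr_gt0.
by rewrite divr_gt0 ?mulr_gt0 ?addr_gt0.
Qed.
End M.

Local Close Scope classical_set_scope.
Unset Implicit Arguments.

Theorem corollary2 (R : realType) (K M w : nat) (s : 'I_M -> {ffun 'I_K -> bool})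
    (cs cn : R) :
  (2 <= M)%N -> injective s -> (forall i, weight (s i) = w) ->
  0 < cs -> 0 < cn ->
  (Pe_code cs cn s <=
   ((M%:R)^-1)%:E *
   \sum_(i < M) \sum_(j < M | j != i)
      (((1 / 2) * fd cs cn (hamming (s i) (s j)) 0)%:E
       + \sum_(1 <= x <oo) (fd cs cn (hamming (s i) (s j)) x)%:E))%E.
Proof.
move=> M2 sinj sw cs0 cn0.
rewrite /Pe_code.
apply: lee_wpmul2l; first by rewrite lee_fin invr_ge0.
apply: lee_sum => i _.
apply: (@le_trans _ _ (\sum_(j < M | j != i) \esum_(r in [set: {ffun 'I_K -> nat}])
   (lik cs cn (s i) r * gij cs cn (s i) (s j) r)%:E)%E).
  rewrite -esum_sum; last by move=> r j _ _; rewrite lee_fin mulr_ge0 ?lik_ge0 ?gij_ge0 ?ltW.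
  apply: le_esum => r _; rewrite sumEFin lee_fin -mulr_sumr.
  by apply: ler_wpM2l; [apply: lik_ge0; apply: ltW | apply: pdet_bound].
apply: lee_sum => j ji.
rewrite pair_esum // ?sw //.
by apply: contra ji => /eqP /sinj ->.
Qed.
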